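(* Let $\Gamma=K_{r,t}$ be the complete bipartite graph with parts of sizes $r$ and $t$, where $t\le r$. For every integer $k\in\{2-r,\dots,r\}$: (a) if $k\ge t+1$, then $\gamma_k^o(\Gamma)=r$; (b) if $k\le t$ and $\left\lceil\frac{r+k}{2}\right\rceil+\left\lceil\frac{t+k}{2}\right\rceil\ge t$, then $\gamma_k^o(\Gamma)=t$; (c) if $-t<k\le t$ and $\left\lceil\frac{r+k}{2}\right\rceil+\left\lceil\frac{t+k}{2}\right\rceil< t$, then $\gamma_k^o(\Gamma)=\left\lceil\frac{r+k}{2}\right\rceil+\left\lceil\frac{t+k}{2}\right\rceil$; (d) if $k\le -t$ and $\left\lceil\frac{r+k}{2}\right\rceil+\left\lceil\frac{t+k}{2}\right\rceil< t$, then $\gamma_k^o(\Gamma)=\min\{t,1+\left\lceil\frac{r+k}{2}\right\rceil\}$.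
   Context: Graphs are finite and simple. For a graph $\Gamma=(V,E)$, $S\subseteq V$ and $v\in V$, $\delta_S(v)$ denotes the number of neighbours of $v$ in $S$, $\overline{S}=V\setminus S$, and $\partial(S)$ is the set of vertices of $\overline{S}$ having at least one neighbour in $S$. For an integer $k$, a nonempty set $S\subseteq V$ is an offensive $k$-alliance if $\delta_S(v)\ge\delta_{\overline{S}}(v)+k$ for every $v\in\partial(S)$. It is a global offensive $k$-alliance if moreover it is a dominating set (every vertex of $\overline{S}$ has a neighbour in $S$). $\gamma_k^o(\Gamma)$ denotes the minimum cardinality of a global offensive $k$-alliance in $\Gamma$. *)

(* Defs.v *)
From mathcomp Require Import all_boot all_order all_algebra.
Set Implicit Arguments. Unset Strict Implicit. Unset Printing Implicit Defensive.
Import Order.TTheory GRing.Theory Num.Theory.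

(* A simple graph: a symmetric irreflexive relation e on a finType T. *)
Section Alliances.
Variable T : finType.
Variable e : rel T.

Definition delta (S : {set T}) (v : T) : nat := #|[set u in S | e v u]|.

Definition boundary (S : {set T}) : {set T} :=
  [set v in ~: S | [exists u in S, e v u]].

Definition offensive_alliance (k : int) (S : {set T}) : bool :=
  (S != set0) &&
  [forall v in boundary S, ((delta S v)%:Z >= (delta (~: S) v)%:Z + k)%R].

Definition dominating (S : {set T}) : bool :=
  [forall v in ~: S, [exists u in S, e v u]].

Definition global_offensive_alliance (k : int) (S : {set T}) : bool :=
  offensive_alliance k S && dominating S.

(* gamma_k^o: minimum cardinality of a global offensive k-alliance
   (the whole vertex set is always one when T is nonempty, so #|T| is a
   valid default for the minimum). *)
Definition gamma_o (k : int) : nat :=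
  \big[minn/#|T|]_(S : {set T} | global_offensive_alliance k S) #|S|.
End Alliances.

Definition Kbip (r t : nat) : rel ('I_r + 'I_t)%type :=
  fun x y => match x, y with
             | inl _, inr _ | inr _, inl _ => true
             | _, _ => false
             end.

Definition ceil2 (n : int) : int := ((n + 1) %/ 2)%Z.

(* Main.v *)
Require Import Defs.
From mathcomp Require Import all_boot all_order all_algebra zify.
Import Order.TTheory GRing.Theory Num.Theory.
Local Open Scope ring_scope.
Set Implicit Arguments. Unset Strict Implicit.

Lemma ceil2P (n : int) : n <= 2 * ceil2 n <= n + 1.
Proof. rewrite /ceil2. lia. Qed.

Lemma bigmin_le (I : eqType) (s : seq I) (P : pred I) (F : I -> nat) x i :
  i \in s -> P i -> (\big[minn/x]_(j <- s | P j) F j <= F i)%N.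
Proof.
elim: s => [//|y s IH]; rewrite inE big_cons => /orP[/eqP <- Pi|Hi Pi].
  by rewrite Pi geq_minl.
case: (P y); last exact: IH.
by rewrite geq_min IH ?orbT.
Qed.

Section K.
Variables (r t : nat).
Local Notation T := ('I_r + 'I_t)%type.

Lemma card_split (P : {pred T}) :
  #|P| = (#|[pred i | inl i \in P]| + #|[pred j | inr j \in P]|)%N.
Proof. by rewrite -!sum1_card big_sumType. Qed.

Definition nA (S : {set T}) := #|[pred i : 'I_r | inl i \in S]|.
Definition nB (S : {set T}) := #|[pred j : 'I_t | inr j \in S]|.

Lemma cardS (S : {set T}) : #|S| = (nA S + nB S)%N.
Proof. by rewrite card_split. Qed.

Lemma nA_le (S : {set T}) : (nA S <= r)%N.
Proof. by have := max_card (mem [pred i : 'I_r | inl i \in S]); rewrite card_ord. Qed.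
Lemma nB_le (S : {set T}) : (nB S <= t)%N.
Proof. by have := max_card (mem [pred i : 'I_t | inr i \in S]); rewrite card_ord. Qed.

Lemma nAC (S : {set T}) : #|[pred i : 'I_r | inl i \notin S]| = (r - nA S)%N.
Proof.
have -> : #|[pred i : 'I_r | inl i \notin S]| = #|[predC [pred i : 'I_r | inl i \in S]]|.
  by apply: eq_card => i; rewrite !inE.
have := cardC ([pred i : 'I_r | inl i \in S]); rewrite card_ord /nA => H; rewrite -[X in (X - _)%N]H addKn; apply: eq_card => i; rewrite !inE //=.
Qed.
Lemma nBC (S : {set T}) : #|[pred j : 'I_t | inr j \notin S]| = (t - nB S)%N.
Proof.
have -> : #|[pred i : 'I_t | inr i \notin S]| = #|[predC [pred i : 'I_t | inr i \in S]]|.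
  by apply: eq_card => i; rewrite !inE.
have := cardC ([pred i : 'I_t | inr i \in S]); rewrite card_ord /nB => H; rewrite -[X in (X - _)%N]H addKn; apply: eq_card => i; rewrite !inE //=.
Qed.

Lemma deltaL (S : {set T}) i : delta (@Kbip r t) S (inl i) = nB S.
Proof.
rewrite /delta card_split (@eq_card _ _ pred0) ?card0 ?add0n.
  by apply: eq_card => j; rewrite !inE /= andbT.
by move=> j; rewrite !inE /= andbF.
Qed.
Lemma deltaR (S : {set T}) j : delta (@Kbip r t) S (inr j) = nA S.
Proof.
rewrite /delta card_split [X in (_ + X)%N](@eq_card _ _ pred0) ?card0 ?addn0.
  by apply: eq_card => i; rewrite !inE /= andbT.
by move=> i; rewrite !inE /= andbF.
Qed.

Lemma deltaLC (S : {set T}) i : delta (@Kbip r t) (~: S) (inl i) = (t - nB S)%N.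
Proof. by rewrite deltaL -nBC; apply: eq_card => j; rewrite !inE. Qed.
Lemma deltaRC (S : {set T}) j : delta (@Kbip r t) (~: S) (inr j) = (r - nA S)%N.
Proof. by rewrite deltaR -nAC; apply: eq_card => i; rewrite !inE. Qed.

Lemma exL (S : {set T}) i : [exists u in S, Kbip (inl i) u] = (0 < nB S)%N.
Proof.
apply/existsP/card_gt0P => [[[u|u]]|[j Hj]]; rewrite /= ?andbF //.
  by rewrite andbT => Hu; exists u; rewrite inE.
by exists (inr j); rewrite andbT; move: Hj; rewrite inE.
Qed.
Lemma exR (S : {set T}) j : [exists u in S, Kbip (inr j) u] = (0 < nA S)%N.
Proof.
apply/existsP/card_gt0P => [[[u|u]]|[i Hi]]; rewrite /= ?andbF //.
  by rewrite andbT => Hu; exists u; rewrite inE.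
by exists (inl i); rewrite andbT; move: Hi; rewrite inE.
Qed.

Lemma notinL (S : {set T}) : reflect (exists i, inl i \notin S) (nA S < r)%N.
Proof.
have H := nAC S; have hA := nA_le S.
apply: (iffP idP) => [lt|[i Hi]].
  have : (0 < #|[pred i : 'I_r | inl i \notin S]|)%N by rewrite H; lia.
  by case/card_gt0P => i Hi; exists i.
have : (0 < #|[pred i : 'I_r | inl i \notin S]|)%N by apply/card_gt0P; exists i.
rewrite H; lia.
Qed.
Lemma notinR (S : {set T}) : reflect (exists i, inr i \notin S) (nB S < t)%N.
Proof.
have H := nBC S; have hB := nB_le S.
apply: (iffP idP) => [lt|[i Hi]].
  have : (0 < #|[pred i : 'I_t | inr i \notin S]|)%N by rewrite H; lia.
  by case/card_gt0P => i Hi; exists i.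
have : (0 < #|[pred i : 'I_t | inr i \notin S]|)%N by apply/card_gt0P; exists i.
rewrite H; lia.
Qed.

Definition validb (k : int) (a b : nat) :=
  [&& (0 < a + b)%N,
      (a == r) || ((0 < b)%N && (t%:Z + k <= 2 * b%:Z)) &
      (b == t) || ((0 < a)%N && (r%:Z + k <= 2 * a%:Z))].

Lemma glob_valid k (S : {set T}) :
  global_offensive_alliance (@Kbip r t) k S = validb k (nA S) (nB S).
Proof.
rewrite /global_offensive_alliance /offensive_alliance /dominating -card_gt0 cardS.
have hA := nA_le S; have hB := nB_le S.
apply/idP/idP.
  move=> /andP[/andP[H0 /forallP Hb] /forallP Hd].
  apply/and3P; split => //.
    case: (ltnP (nA S) r) => [/notinL [i Hi]|Hr]; last by apply/orP; left; apply/eqP; lia.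
    have := Hd (inl i); have := Hb (inl i); rewrite !inE Hi exL /= (deltaL S i) (deltaLC S i).
    move=> Hc Hp; apply/orP; right; rewrite Hp /=; move: Hc; rewrite Hp; lia.
  case: (ltnP (nB S) t) => [/notinR [i Hi]|Hr]; last by apply/orP; left; apply/eqP; lia.
  have := Hd (inr i); have := Hb (inr i); rewrite !inE Hi exR /= (deltaR S i) (deltaRC S i).
  move=> Hc Hp; apply/orP; right; rewrite Hp /=; move: Hc; rewrite Hp; lia.
case/and3P => H0 HA HB; rewrite H0 /=.
apply/andP; split; apply/forallP => -[i|j]; rewrite !inE.
- apply/implyP => /andP[Hi _].
  have lt : (nA S < r)%N by apply/notinL; exists i.
  move: HA; rewrite (_ : (nA S == r) = false) /=; last by apply/eqP; lia.
  move=> /andP[Hp Hc]; rewrite (deltaL S i) (deltaLC S i); lia.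
- apply/implyP => /andP[Hi _].
  have lt : (nB S < t)%N by apply/notinR; exists j.
  move: HB; rewrite (_ : (nB S == t) = false) /=; last by apply/eqP; lia.
  move=> /andP[Hp Hc]; rewrite (deltaR S j) (deltaRC S j); lia.
- apply/implyP => Hi.
  have lt : (nA S < r)%N by apply/notinL; exists i.
  move: HA; rewrite (_ : (nA S == r) = false) /=; last by apply/eqP; lia.
  by move=> /andP[Hp Hc]; rewrite exL.
- apply/implyP => Hi.
  have lt : (nB S < t)%N by apply/notinR; exists j.
  move: HB; rewrite (_ : (nB S == t) = false) /=; last by apply/eqP; lia.
  by move=> /andP[Hp Hc]; rewrite exR.
Qed.

Lemma gamma_eq k m :
  (forall S : {set T}, global_offensive_alliance (@Kbip r t) k S -> (m <= #|S|)%N) ->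
  (exists S : {set T}, global_offensive_alliance (@Kbip r t) k S && (#|S| == m)) ->
  gamma_o (@Kbip r t) k = m.
Proof.
move=> Hm [S0 /andP[HS0 /eqP Hc]]; rewrite -Hc in Hm *.
apply/eqP; rewrite eqn_leq; apply/andP; split.
  rewrite /gamma_o; apply: bigmin_le => //; exact: mem_index_enum.
rewrite /gamma_o; apply: (big_ind (fun x => #|S0| <= x)%N) => //.
  exact: max_card.
by move=> x y hx hy; rewrite leq_min hx hy.
Qed.

Lemma card_lt n a : (a <= n)%N -> #|[pred i : 'I_n | (i < a)%N]| = a.
Proof.
move=> Ha; rewrite -sum1_card (eq_bigl (fun i : 'I_n => (i < a)%N)) //.
by rewrite (big_ord_narrow Ha) /= sum1_card card_ord.
Qed.

Definition mkS (a b : nat) : {set T} :=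
  [set x : T | match x with inl i => (i < a)%N | inr j => (j < b)%N end].

Lemma nA_mkS a b : (a <= r)%N -> nA (mkS a b) = a.
Proof. by move=> Ha; rewrite -[RHS](card_lt Ha); apply: eq_card => i; rewrite !inE. Qed.
Lemma nB_mkS a b : (b <= t)%N -> nB (mkS a b) = b.
Proof. by move=> Hb; rewrite -[RHS](card_lt Hb); apply: eq_card => i; rewrite !inE. Qed.

Lemma gamma_num k m :
  (forall a b, (a <= r)%N -> (b <= t)%N -> validb k a b -> (m <= a + b)%N) ->
  (exists a b, [&& (a <= r)%N, (b <= t)%N, validb k a b & (a + b == m)%N]) ->
  gamma_o (@Kbip r t) k = m.
Proof.
move=> Hl [a [b /and4P[Ha Hb Hv He]]]; apply: gamma_eq.
  by move=> S; rewrite glob_valid cardS; apply: Hl; [apply: nA_le|apply: nB_le].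
by exists (mkS a b); rewrite glob_valid cardS nA_mkS // nB_mkS // Hv.
Qed.
End K.

Theorem mainTheorem1 (r t : nat) (k : int) :
  (0 < t)%N -> (t <= r)%N ->
  2 - r%:Z <= k -> k <= r%:Z ->
  let g := (@gamma_o _ (@Kbip r t) k)%:Z in
  let c := ceil2 (r%:Z + k) + ceil2 (t%:Z + k) in
  (t%:Z + 1 <= k -> g = r%:Z) /\
  (k <= t%:Z -> t%:Z <= c -> g = t%:Z) /\
  (- t%:Z < k -> k <= t%:Z -> c < t%:Z -> g = c) /\
  (k <= - t%:Z -> c < t%:Z -> g = Num.min t%:Z (1 + ceil2 (r%:Z + k))).
Proof.
move=> t0 tr k1 k2 g c.
have := ceil2P (r%:Z + k); have := ceil2P (t%:Z + k).
rewrite /c; move: (ceil2 (r%:Z + k)) (ceil2 (t%:Z + k)) => ca cb Hb Ha.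
rewrite /c /g; clear g c.
split; [|split; [|split]].
- move=> hk; rewrite (@gamma_num r t k r) //.
    by move=> a b ? ? /=; rewrite /validb; lia.
  by exists r, 0%N; rewrite /validb; lia.
- move=> hk hc; rewrite (@gamma_num r t k t) //.
    by move=> a b ? ? /=; rewrite /validb; lia.
  by exists 0%N, t; rewrite /validb; lia.
- move=> hk1 hk2 hc; rewrite (@gamma_num r t k (absz (ca + cb))); first lia.
    by move=> a b ? ? /=; rewrite /validb; lia.
  by exists (absz ca), (absz cb); rewrite /validb; lia.
- move=> hk hc.
  have [h|h] := leP (t%:Z) (1 + ca).
    rewrite (@gamma_num r t k t) //.
      by move=> a b ? ? /=; rewrite /validb; lia.
    by exists 0%N, t; rewrite /validb; lia.
  rewrite (@gamma_num r t k (absz (1 + ca))); first lia.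
    by move=> a b ? ? /=; rewrite /validb; lia.
  by exists (absz ca), 1%N; rewrite /validb; lia.
Qed.
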